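(* In the setting below, suppose that $$g(x)=\gcd(g_{11}(x),g_{22}(x))=\gcd(g_{11}(x),g_{11}^*(x))=\gcd(g_{22}(x),g_{22}^*(x)),$$ that $g(x)$ is self-reciprocal, and that $g_{11}(x)g_{22}(x)$ is self-reciprocal. Then $C$ is symplectic LCD.
   Context: Let $q$ be a prime power, $F=\mathbb{F}_q$, $m\ge1$ with $\gcd(q,m)=1$, and $R=F[x]/\langle x^m-1\rangle$; elements of $R$ are represented by polynomials of degree $<m$ and identified with their coefficient vectors in $F^m$. A quasi-cyclic code of length $2m$ and index $2$ is an $R$-submodule $C\subseteq R^2$. For $a,b\in R$ let $\langle a,b\rangle_e$ be the standard dot product of their coefficient vectors. The symplectic form on $R^2$ is $\langle (a_1,a_2),(b_1,b_2)\rangle_s=\langle a_1,b_2\rangle_e-\langle a_2,b_1\rangle_e$; $C$ is symplectic LCD if $C\cap C^{\perp_s}=\{0\}$. For a nonzero polynomial $f$ of degree $k$, $f^*(x)=x^kf(x^{-1})$; $f$ is self-reciprocal if $f^*=\alpha f$ for some $\alpha\in F$. Gcds are taken monic. Suppose $C$ is generated as an $R$-module by $(g_{11}(x),g_{12}(x))$ and $(0,g_{22}(x))$, where $g_{11},g_{12},g_{22}\in F[x]$ satisfy: $g_{11}\mid x^m-1$, $g_{22}\mid x^m-1$, $\deg g_{12}<\deg g_{22}$, and $g_{11}g_{22}\mid (x^m-1)g_{12}$. *)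

(* Defs.v *)
From HB Require Import structures.
From mathcomp Require Import all_boot all_order all_algebra all_field.
Set Implicit Arguments. Unset Strict Implicit. Unset Printing Implicit Defensive.
Import GRing.Theory.
Local Open Scope ring_scope.

(* Reciprocal polynomial f^*(x) = x^(deg f) f(1/x): coefficient i is f_(deg f - i). *)
Definition recip (F : fieldType) (f : {poly F}) : {poly F} :=
  \poly_(i < size f) f`_((size f).-1 - i).

Definition self_recip (F : fieldType) (f : {poly F}) : Prop :=
  f != 0 /\ exists alpha : F, recip f = alpha *: f.

(* Monic gcd (gcd 0 0 = 0). *)
Definition mgcd (F : fieldType) (p q : {poly F}) : {poly F} :=
  (lead_coef (gcdp p q))^-1 *: gcdp p q.

(* R = F[x]/<x^m - 1>, elements represented by polynomials of degree < m. *)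
Definition redm (F : fieldType) (m : nat) (p : {poly F}) : {poly F} :=
  p %% ('X^m - 1).

Definition dot_e (F : fieldType) (m : nat) (a b : {poly F}) : F :=
  \sum_(i < m) a`_i * b`_i.

Definition symp (F : fieldType) (m : nat) (u v : {poly F} * {poly F}) : F :=
  dot_e m u.1 v.2 - dot_e m u.2 v.1.

Definition qc_code (F : fieldType) (m : nat) (g11 g12 g22 : {poly F})
  (c : {poly F} * {poly F}) : Prop :=
  exists a b : {poly F},
    c = (redm m (a * g11), redm m (a * g12 + b * g22)).

Definition symplectic_LCD (F : fieldType) (m : nat)
  (C : {poly F} * {poly F} -> Prop) : Prop :=
  forall c, C c -> (forall d, C d -> symp m c d = 0) -> c = (0, 0).

(* Main.v *)
Require Import Defs.
From HB Require Import structures.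
From mathcomp Require Import all_boot all_order all_algebra all_field.
From mathcomp Require Import zify ring.
Set Implicit Arguments. Unset Strict Implicit. Unset Printing Implicit Defensive.
Import GRing.Theory.
Local Open Scope ring_scope.

Section Basic.
Variable F : fieldType.
Implicit Types p q u v : {poly F}.

Lemma dvdp_sumP (I : finType) (d : {poly F}) (G : I -> {poly F}) :
  (forall i, d %| G i) -> d %| \sum_i G i.
Proof.
move=> H; apply: (big_ind (fun x => d %| x)) => //.
by move=> x y; apply: dvdp_add.
Qed.

Lemma XnB1_dvd (N j : nat) : ('X^N - 1 : {poly F}) %| 'X^(N * j) - 1.
Proof.
by rewrite exprM; have := subrXX ('X^N : {poly F}) 1 j; rewrite expr1n => ->; rewrite dvdp_mulr.
Qed.

Lemma XkB_dvd (N a b : nat) : a = b %[mod N] ->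
  ('X^N - 1 : {poly F}) %| 'X^a - 'X^b.
Proof.
wlog ab : a b / (b <= a)%N.
  move=> W e; case: (leqP b a) => h; first exact: W.
  by rewrite -dvdpNr opprB; apply: W => //; exact: ltnW.
move=> e.
have [k ek] : exists k, a = (b + N * k)%N.
  exists ((a - b) %/ N)%N.
  have : (N %| a - b)%N by by rewrite -eqn_mod_dvd // e.
  by move/divnK=> h; rewrite mulnC h subnKC.
by rewrite ek exprD -{2}['X^b]mulr1 -mulrBr dvdp_mull // XnB1_dvd.
Qed.

Lemma eqmod_mod (d u v : {poly F}) : d %| u - v -> u %% d = v %% d.
Proof.
move=> h; rewrite -[u](subrK v) modpD (modp_eq0 h) add0r //.
Qed.
End Basic.

Definition bar (F : fieldType) (m : nat) (v : {poly F}) := v \Po 'X^(m.-1).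
Arguments bar {F}.

Section Red.
Variable F : fieldType.
Variable m : nat.
Hypothesis m0 : (0 < m)%N.
Implicit Types p q u v : {poly F}.

Lemma sizeM : size ('X^m - 1 : {poly F}) = m.+1.
Proof. by rewrite -polyC1 size_XnsubC. Qed.

Lemma M_neq0 : ('X^m - 1 : {poly F}) != 0.
Proof. by rewrite -size_poly_eq0 sizeM. Qed.

Lemma redmXn a : redm m ('X^a : {poly F}) = 'X^(a %% m).
Proof.
rewrite /redm (@eqmod_mod _ _ _ 'X^(a %% m)).
  by rewrite modp_small // size_polyXn sizeM ltnS ltn_pmod.
by apply: XkB_dvd; rewrite modn_mod.
Qed.

Lemma redm_sum n (G : 'I_n -> {poly F}) k :
  (redm m (\sum_(i < n) G i))`_k = \sum_(i < n) (redm m (G i))`_k.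
Proof.
elim: n G => [|n IH] G; first by rewrite !big_ord0 /redm mod0p coef0.
by rewrite !big_ord_recr /= /redm modpD coefD IH.
Qed.

Lemma redmZ c p : redm m (c *: p) = c *: redm m p.
Proof. by rewrite /redm modpZl. Qed.

Lemma modcond (i j t : nat) : (j < m)%N -> (t < m)%N ->
  (t == (j + m.-1 * i) %% m)%N = (j == (t + i) %% m)%N.
Proof.
move=> jm tm.
rewrite -{1}(modn_small tm) -(eqn_modDr i) -addnA.
have -> : (m.-1 * i + i = m * i)%N by rewrite -{2}[i]mul1n -mulnDl addn1 prednK.
by rewrite [(j + _)%N]addnC mulnC modnMDl (modn_small jm) eq_sym.
Qed.

Lemma key1 v j t : (j < m)%N -> (t < m)%N ->
  (redm m ('X^j * bar m v))`_t = (redm m ('X^t * v))`_j.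
Proof.
move=> jm tm.
have -> : 'X^t * v = \sum_(i < size v) v`_i *: ('X^t * 'X^i).
  rewrite -{1}[v]comp_polyXr comp_polyE mulr_sumr.
  by apply: eq_bigr => i _; rewrite scalerAr.
rewrite /bar comp_polyE mulr_sumr !redm_sum; apply: eq_bigr => i _.
rewrite -scalerAr !redmZ !coefZ; congr (_ * _).
by rewrite -exprM -!exprD !redmXn !coefXn modcond.
Qed.

Lemma key (U v : {poly F}) t : (size U <= m)%N -> (t < m)%N ->
  (redm m (U * bar m v))`_t = dot_e m U (redm m ('X^t * v)).
Proof.
move=> sU tm.
have eU : U = \sum_(j < m) U`_j *: 'X^j.
  rewrite -poly_def; apply/polyP => k; rewrite coef_poly.
  by case: ltnP => // h; rewrite nth_default // (leq_trans sU h).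
rewrite /dot_e {1}eU mulr_suml redm_sum; apply: eq_bigr => j _.
by rewrite -scalerAl redmZ coefZ key1.
Qed.
End Red.

Section Recip.
Variable F : fieldType.
Implicit Types p q u v : {poly F}.

Lemma scal_dvd (d p : {poly F}) c : d %| p -> d %| c *: p.
Proof. by move=> h; rewrite -mul_polyC dvdp_mull. Qed.

Lemma recip_bar N q : (0 < N)%N ->
  ('X^N - 1 : {poly F}) %| recip q - 'X^((size q).-1) * bar N q.
Proof.
move=> N0.
rewrite /recip poly_def /bar comp_polyE mulr_sumr (reindex_inj rev_ord_inj) /=.
rewrite -sumrB; apply: dvdp_sumP => i.
have hi := ltn_ord i.
have e : forall s k, (k < s)%N -> (s.-1 - (s - k.+1) = k)%N by move=> s k; lia.
rewrite e //.
rewrite -scalerAr -scalerBr; apply: scal_dvd.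
rewrite -exprM -exprD; apply: XkB_dvd.
have e2 : forall s k, (k < s)%N -> (s.-1 + N.-1 * k = (s - k.+1) + N * k)%N by move=> s k; nia.
rewrite e2 //.
by rewrite [(_ + N * _)%N]addnC mulnC modnMDl.
Qed.

Lemma recip0 : recip (0 : {poly F}) = 0.
Proof. by rewrite /recip size_poly0 poly_def big_ord0. Qed.

Lemma recip_mul p q : recip (p * q) = recip p * recip q.
Proof.
have [->|p0] := eqVneq p 0; first by rewrite mul0r recip0 mul0r.
have [->|q0] := eqVneq q 0; first by rewrite mulr0 recip0 mulr0.
set N := (size p + size q)%N.
have N0 : (0 < N)%N by rewrite /N addn_gt0 size_poly_gt0 p0.
have h1 := recip_bar (p * q) N0.
have h2 := recip_bar p N0.
have h3 := recip_bar q N0.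
have sp : (0 < size p)%N by rewrite size_poly_gt0.
have sq : (0 < size q)%N by rewrite size_poly_gt0.
have spq : (size (p * q)).-1 = ((size p).-1 + (size q).-1)%N.
  rewrite size_mul //; move: sp sq; case: (size p) => // a; case: (size q) => // b _ _ /=; by rewrite addnS.
apply: subr0_eq.
set D := recip (p * q) - recip p * recip q.
have hD : ('X^N - 1 : {poly F}) %| D.
  have -> : D = (recip (p * q) - 'X^((size (p * q)).-1) * bar N (p * q))
     - (recip p - 'X^((size p).-1) * bar N p) * recip q
     - ('X^((size p).-1) * bar N p) * (recip q - 'X^((size q).-1) * bar N q).
    by rewrite /D /bar comp_polyM spq exprD; ring.
  by apply: dvdp_sub; [apply: dvdp_sub; [|apply: dvdp_mulr]|apply: dvdp_mull].
have sD : (size D < size (('X^N - 1)%R : {poly F}))%N.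
  rewrite -polyC1 size_XnsubC // ltnS.
  apply: (leq_trans (size_polyD _ _)); rewrite size_polyN geq_max.
  have s1 : (size (recip (p * q)%R) <= size (p * q)%R)%N by apply: size_poly.
  have s2 : (size (recip p) <= size p)%N by apply: size_poly.
  have s3 : (size (recip q) <= size q)%N by apply: size_poly.
  have s4 := size_polyMleq (recip p) (recip q).
  rewrite size_mul // in s1.
  apply/andP; split; first exact: (leq_trans s1 (leq_pred _)).
  exact: (leq_trans s4 (leq_trans (leq_pred _) (leq_add s2 s3))).
apply/eqP; apply: contraLR sD => /negbTE nD.
by rewrite -leqNgt dvdp_leq ?nD.
Qed.

Lemma recip_neq0 p : p != 0 -> recip p != 0.
Proof.
move=> p0; apply/eqP => /polyP/(_ 0%N).
rewrite coef_poly size_poly_gt0 p0 subn0 coef0 => /eqP.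
by rewrite -/(lead_coef p) lead_coef_eq0 (negbTE p0).
Qed.

Lemma recip_dvd p q : p %| q -> recip p %| recip q.
Proof.
move=> /dvdpP [k ->]; by rewrite recip_mul dvdp_mull.
Qed.

Lemma recipM m : (0 < m)%N -> recip ('X^m - 1 : {poly F}) = - ('X^m - 1).
Proof.
move=> m0; apply/polyP => k.
rewrite coef_poly -polyC1 size_XnsubC // coefN !coefB !coefXn !coefC /=.
have mn0 : (m == 0)%N = false by apply/negbTE; rewrite -lt0n.
case: ltnP => km.
  case: (eqVneq k 0) => [->|k0].
    by rewrite subn0 eqxx mn0 eq_sym mn0 /= subr0 sub0r opprK.
  have -> : (m - k == m)%N = false.
    by apply/negbTE/eqP => h; move: k0 => /eqP; lia.
  have -> : (m - k == 0)%N = (k == m).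
    by apply/idP/idP => /eqP h; apply/eqP; lia.
  by case: (k == m); rewrite /= ?subr0 ?sub0r ?oppr0.
have -> : (k == m) = false by apply/negbTE/eqP => h; lia.
have -> : (k == 0)%N = false by apply/negbTE/eqP => h; lia.
by rewrite subrr oppr0.
Qed.
End Recip.

Section Alg.
Variable F : fieldType.
Variable m : nat.
Hypothesis m0 : (0 < m)%N.
Hypothesis mR : (m%:R : F) != 0.
Local Notation M := ('X^m - 1 : {poly F}).

Lemma sepM : separable_poly M.
Proof.
rewrite unlock; apply/Bezout_eq1_coprimepP.
exists (-1, (m%:R)^-1 *: 'X) => /=.
rewrite derivB derivXn -polyC1 derivC subr0.
rewrite -scaler_nat -scalerAl -scalerAr scalerA mulVf // scale1r -exprS prednK // polyC1.
by rewrite mulN1r opprB subrK.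
Qed.

Lemma sep_cop u v : u * v %| M -> coprimep u v.
Proof. exact: separable_coprime sepM. Qed.

Lemma Rd p q : p %| M -> p * q != 0 ->
  gcdp p q %= gcdp p (recip p) ->
  (exists alpha : F, recip (p * q) = alpha *: (p * q)) ->
  recip p %| q.
Proof.
move=> pM pq0 hg [al hal].
have p0 : p != 0 by apply: contraNneq pq0 => ->; rewrite mul0r.
have d0 : recip p != 0 by apply: recip_neq0.
have al0 : al != 0.
  apply/eqP => e; move: (recip_neq0 pq0); by rewrite hal e scale0r eqxx.
have dpq : recip p %| p * q.
  by rewrite -(dvdpZr _ _ al0) -hal recip_mul dvdp_mulr.
have dM : recip p %| M.
  by rewrite -dvdpNr -recipM // recip_dvd.
set d := recip p in dpq dM d0 *.
set u := gcdp p d.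
have uq : u %| q by rewrite /u -(eqp_dvdl _ hg) dvdp_gcdr.
have ud : u %| d by apply: dvdp_gcdr.
have u0 : u != 0 by rewrite /u gcdp_eq0 negb_and p0.
have duq : d %| u * q.
  rewrite /u (eqp_dvdr _ (mulp_gcdl _ _ _)) dvdp_gcd dpq /=.
  by rewrite dvdp_mulr.
have ed : d = (d %/ u) * u by rewrite divpK.
have dq : d %/ u %| q.
  by rewrite -(dvdp_mul2r _ _ u0) -ed mulrC.
have cop : coprimep (d %/ u) u by apply: sep_cop; rewrite -ed.
by rewrite ed Gauss_dvdp // dq uq.
Qed.

Lemma Lmain (p q a : {poly F}) : p %| M -> p != 0 ->
  coprimep (M %/ p) (recip q) ->
  (forall r, dot_e m (redm m (a * p)) (redm m (r * q)) = 0) ->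
  redm m (a * p) = 0.
Proof.
move=> pM p0 cop H.
set U := redm m (a * p).
have sU : (size U <= m)%N.
  by rewrite -ltnS -(sizeM F m0) ltn_modp M_neq0.
have h0 : redm m (U * bar m q) = 0.
  apply/polyP => t; rewrite coef0.
  case: (ltnP t m) => tm.
    by rewrite key // -[_ * q]/(('X^t : {poly F}) * q) -H; congr (dot_e _ _ (redm _ _)); rewrite mulrC.
  rewrite nth_default // (leq_trans _ tm) // -ltnS -(sizeM F m0).
  by rewrite ltn_modp M_neq0.
have h1 : M %| U * bar m q by apply/modp_eq0P.
have h2 : M %| a * p * bar m q.
  have -> : a * p * bar m q = (a * p - U) * bar m q + U * bar m q by ring.
  rewrite dvdp_add // dvdp_mulr // /U /redm.
  by rewrite {1}(divp_eq (a * p) M) addrK dvdp_mull.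
have h3 : M %| a * p * recip q.
  have -> : a * p * recip q = a * p * (recip q - 'X^((size q).-1) * bar m q)
       + 'X^((size q).-1) * (a * p * bar m q) by ring.
  by apply: dvdp_add; apply: dvdp_mull; [exact: recip_bar|].
have eM : M = (M %/ p) * p by rewrite divpK.
have h4 : M %/ p %| a.
  by move: h3; rewrite {1}eM -mulrA [p * _]mulrC mulrA dvdp_mul2r // Gauss_dvdpl.
rewrite /U /redm; apply/modp_eq0P; rewrite {1}eM dvdp_mul2r //.
Qed.
End Alg.

Lemma natr_m_neq0 (F : finFieldType) (m : nat) : (0 < m)%N -> coprime #|F| m -> m%:R != 0 :> F.
Proof.
move=> m0 cop; case: (finPcharP F) => p pp chp.
have hc := card_pprimeChar chp.
have e : #|F| = (p ^ logn p #|F|)%N by exact: hc.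
rewrite -(dvdn_pcharf chp); apply/negP => pm.
have g1 := finNzRing_gt1 F.
have pF : (p %| #|F|)%N.
  rewrite e; case: (logn p #|F|) e => [|k] ek; last by rewrite expnS dvdn_mulr.
  by move: g1; rewrite ek.
move: cop; rewrite /coprime => /eqP cop.
have : (p %| gcdn #|F| m)%N by rewrite dvdn_gcd pF pm.
by rewrite cop dvdn1 => /eqP p1; move: pp; rewrite p1.
Qed.

Lemma mgcd_eqp (F : fieldType) (p q : {poly F}) : p != 0 -> mgcd p q %= gcdp p q.
Proof.
move=> p0; by rewrite /mgcd eqp_scale // invr_eq0 lead_coef_eq0 gcdp_eq0 negb_and p0.
Qed.

Lemma dot0r (F : fieldType) m (u : {poly F}) : dot_e m u 0 = 0.
Proof. by rewrite /dot_e big1 // => i _; rewrite coef0 mulr0. Qed.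

Lemma dot0l (F : fieldType) m (u : {poly F}) : dot_e m 0 u = 0.
Proof. by rewrite /dot_e big1 // => i _; rewrite coef0 mul0r. Qed.

Unset Implicit Arguments.

Theorem corollary5p7 (F : finFieldType) (m : nat) (g11 g12 g22 : {poly F}) :
  (0 < m)%N ->
  coprime #|F| m ->
  g11 %| 'X^m - 1 ->
  g22 %| 'X^m - 1 ->
  (size g12 < size g22)%N ->
  g11 * g22 %| ('X^m - 1) * g12 ->
  mgcd g11 g22 = mgcd g11 (recip g11) ->
  mgcd g11 g22 = mgcd g22 (recip g22) ->
  self_recip (mgcd g11 g22) ->
  self_recip (g11 * g22) ->
  symplectic_LCD m (qc_code m g11 g12 g22).
Proof.
move=> m0 cop h11 h22 s12 hdiv hg1 hg2 _ [pq0 [al hal]].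
have mR := natr_m_neq0 m0 cop.
have M0 : ('X^m - 1 : {poly F}) != 0 by exact: M_neq0.
have g110 : g11 != 0.
  by apply/eqP => e; move: h11; rewrite e dvd0p (negbTE M0).
have g220 : g22 != 0.
  by apply/eqP => e; move: h22; rewrite e dvd0p (negbTE M0).
have hg1' : gcdp g11 g22 %= gcdp g11 (recip g11).
  apply: (@eqp_trans _ (mgcd g11 g22)); first by rewrite eqp_sym mgcd_eqp.
  by rewrite hg1 mgcd_eqp.
have hg2' : gcdp g22 g11 %= gcdp g22 (recip g22).
  apply: eqp_trans (gcdpC _ _) _.
  apply: (@eqp_trans _ (mgcd g11 g22)); first by rewrite eqp_sym mgcd_eqp.
  by rewrite hg2 mgcd_eqp.
have r11 : recip g11 %| g22.
  by apply: (Rd m0 mR h11 pq0 hg1'); exists al.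
have r22 : recip g22 %| g11.
  apply: (Rd m0 mR h22 _ hg2'); first by rewrite mulrC.
  by exists al; rewrite mulrC hal.
have cop1 : coprimep (('X^m - 1) %/ g11) (recip g22).
  apply: coprimep_dvdl r22 _; apply: (sep_cop m0 mR).
  by rewrite divpK.
have cop2 : coprimep (('X^m - 1) %/ g22) (recip g11).
  apply: coprimep_dvdl r11 _; apply: (sep_cop m0 mR).
  by rewrite divpK.
move=> c [a [b ->]] H.
have H1 : forall r, dot_e m (redm m (a * g11)) (redm m (r * g22)) = 0.
  move=> r.
  have := H (0, redm m (r * g22)).
  rewrite /symp /= dot0r subr0; apply.
  by exists 0, r; rewrite !mul0r add0r /redm mod0p.
have hc1 := Lmain m0 h11 g110 cop1 H1.
have hM : 'X^m - 1 %| a * g11 by apply/modp_eq0P.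
have da : ('X^m - 1) %/ g11 %| a.
  by rewrite -(dvdp_mul2r _ _ g110) divpK.
have dg : g22 %| ('X^m - 1) %/ g11 * g12.
  by rewrite -(dvdp_mul2l _ _ g110) mulrA divpKC.
set t := (a %/ (('X^m - 1) %/ g11)) * ((('X^m - 1) %/ g11 * g12) %/ g22) + b.
have et : a * g12 + b * g22 = t * g22.
  rewrite /t mulrDl -mulrA divpK // -{1}(divpK da) -mulrA.
  by [].
have H2 : forall r, dot_e m (redm m (t * g22)) (redm m (r * g11)) = 0.
  move=> r.
  have := H (redm m (r * g11), redm m (r * g12)).
  rewrite /symp /= hc1 dot0l sub0r et => h.
  apply/eqP; rewrite -oppr_eq0; apply/eqP; apply: h.
  by exists r, 0; rewrite mul0r addr0.
have hc2 := Lmain m0 h22 g220 cop2 H2.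
by rewrite hc1 et hc2.
Qed.
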